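(* Let $d\ge1$, $N\ge2$, let $a:\mathbb{Z}^d\to\mathbb{R}$ define a symmetric, spatially homogeneous, irreducible random walk satisfying condition (F) or condition (HT), let $x_1,\dots,x_N\in\mathbb{Z}^d$ be distinct, and let $\mathscr{H}_\beta=\mathscr{A}+\beta\sum_{i=1}^N\delta_{x_i}\delta_{x_i}^T$ with $\beta>\beta_c$. Let $\lambda_0(\beta)$ be the largest positive eigenvalue of $\mathscr{H}_\beta$. Then every other positive eigenvalue of $\mathscr{H}_\beta$ (i.e. each of $\lambda_1(\beta),\dots,\lambda_{N-1}(\beta)$) has multiplicity at most $N-1$.
   Context: $a$ satisfies $a(0)<0$, $a(z)\ge0$ for $z\ne0$, $a(z)=a(-z)$, $\sum_z a(z)=0$, and irreducibility (every $z\in\mathbb{Z}^d$ is a finite sum of vectors $z_i$ with $a(z_i)\ne0$). $(\mathscr{A}u)(x)=\sum_{x'}a(x-x')u(x')$ on $l^2(\mathbb{Z}^d)$; $\delta_x$ is the indicator vector of $x$. Condition (F): $\sum_z|z|^2a(z)<\infty$. Condition (HT): $a(z)\sim H(z/|z|)|z|^{-(d+\alpha)}$ as $|z|\to\infty$ for some $\alpha\in(0,2)$ and some continuous positive symmetric function $H$ on $\mathbb{S}^{d-1}$. $\beta_c$ is the minimal value of $\beta$ such that the spectrum of $\mathscr{H}_\beta$ contains positive eigenvalues for all $\beta>\beta_c$ sufficiently close to $\beta_c$. The positive eigenvalues of $\mathscr{H}_\beta$ listed with multiplicity are denoted $\lambda_0(\beta)>\lambda_1(\beta)\ge\dots\ge\lambda_{N-1}(\beta)>0$.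 *)

(* Defs.v *)
From HB Require Import structures.
From mathcomp Require Import all_boot all_order all_algebra.
From mathcomp Require Import all_classical all_reals all_analysis.
Set Implicit Arguments. Unset Strict Implicit. Unset Printing Implicit Defensive.
Import Order.TTheory GRing.Theory Num.Theory.
Import numFieldNormedType.Exports.
Local Open Scope ring_scope.
Local Open Scope classical_set_scope.

Definition pt (d : nat) := 'rV[int]_d.

Section Defs.
Variables (R : realType) (d : nat).

Definition sqnorm (z : pt d) : R := \sum_(i < d) ((z 0 i)%:~R) ^+ 2.

Definition dir (z : pt d) : 'rV[R]_d :=
  (Num.sqrt (sqnorm z))^-1 *: map_mx (fun k : int => k%:~R) z.

Definition sphere : set 'rV[R]_d := [set v | \sum_(i < d) (v 0 i) ^+ 2 = 1].

Definition abs_summable (f : pt d -> R) : Prop :=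
  (\esum_(x in [set: pt d]) (`| f x |)%:E < +oo)%E.

Definition rsum (f : pt d -> R) : R :=
  fine (\esum_(x in [set: pt d]) (Num.max (f x) 0)%:E)
  - fine (\esum_(x in [set: pt d]) (Num.max (- f x) 0)%:E).

Definition l2 (u : pt d -> R) : Prop :=
  (\esum_(x in [set: pt d]) ((u x) ^+ 2)%:E < +oo)%E.

Definition opA (a : pt d -> R) (u : pt d -> R) (x : pt d) : R :=
  rsum (fun x' => a (x - x') * u x').

Definition opH (N : nat) (a : pt d -> R) (xs : 'I_N -> pt d) (beta : R)
  (u : pt d -> R) (x : pt d) : R :=
  opA a u x + beta * \sum_(i < N) (if x == xs i then u (xs i) else 0).

Definition is_eigenvalue (op : (pt d -> R) -> pt d -> R) (lam : R) : Prop :=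
  exists u : pt d -> R, [/\ l2 u, u <> (fun _ => 0) & forall x, op u x = lam * u x].

Definition eigenspace_dim_le (op : (pt d -> R) -> pt d -> R) (lam : R) (m : nat)
  : Prop :=
  forall v : 'I_m.+1 -> pt d -> R,
    (forall k, l2 (v k) /\ forall x, op (v k) x = lam * v k x) ->
    exists c : 'I_m.+1 -> R,
      (exists k, c k != 0) /\ forall x, \sum_(k < m.+1) c k * v k x = 0.

Definition rw_kernel (a : pt d -> R) : Prop :=
  [/\ a 0 < 0,
      (forall z, z != 0 -> 0 <= a z),
      (forall z, a z = a (- z)),
      abs_summable a & rsum a = 0].

Definition irreducible_kernel (a : pt d -> R) : Prop :=
  forall z : pt d, exists s : seq (pt d),
    all (fun w => a w != 0) s /\ z = \sum_(w <- s) w.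

Definition condF (a : pt d -> R) : Prop :=
  (\esum_(z in [set: pt d]) (sqnorm z * a z)%:E < +oo)%E.

(* condition (HT): a(z) ~ H(z/|z|) |z|^{-(d+alpha)} as |z| -> oo *)
Definition condHT (a : pt d -> R) : Prop :=
  exists (alpha : R) (H : 'rV[R]_d -> R),
    [/\ 0 < alpha < 2,
        {within sphere, continuous H},
        (forall v, sphere v -> 0 < H v),
        (forall v, sphere v -> H (- v) = H v) &
        forall e : R, 0 < e -> exists M : R, forall z : pt d,
          M < Num.sqrt (sqnorm z) ->
          `| a z / (H (dir z) * (Num.sqrt (sqnorm z)) `^ (- (d%:R + alpha))) - 1 | < e].

Definition beta_c_candidate (N : nat) (a : pt d -> R) (xs : 'I_N -> pt d) (b : R)
  : Prop :=
  exists2 eps : R, 0 < eps & forall beta, b < beta < b + eps ->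
    exists lam, 0 < lam /\ is_eigenvalue (opH a xs beta) lam.

Definition is_beta_c (N : nat) (a : pt d -> R) (xs : 'I_N -> pt d) (bc : R) : Prop :=
  beta_c_candidate a xs bc /\ forall b, beta_c_candidate a xs b -> bc <= b.

Definition largest_pos_eigenvalue (op : (pt d -> R) -> pt d -> R) (lam0 : R) : Prop :=
  [/\ 0 < lam0, is_eigenvalue op lam0 &
      forall lam, 0 < lam -> is_eigenvalue op lam -> lam <= lam0].

End Defs.

(* Main.v *)
Require Import Defs.
From HB Require Import structures.
From mathcomp Require Import all_boot all_order all_algebra.
From mathcomp Require Import all_classical all_reals all_analysis.
From mathcomp Require Import ring lra.
Set Implicit Arguments. Unset Strict Implicit. Unset Printing Implicit Defensive.
Import Order.TTheory GRing.Theory Num.Theory.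
Import numFieldNormedType.Exports.
Local Open Scope ring_scope.
Local Open Scope classical_set_scope.

Lemma absmax (R : realType) (t : R) : `|t| = Num.max t 0 + Num.max (- t) 0.
Proof.
case: (lerP 0 t) => h.
  have h' : - t <= 0 by rewrite oppr_le0.
  by rewrite (max_r h') ger0_norm //; lra.
have h' : 0 <= - t by rewrite oppr_ge0 ltW.
by rewrite (max_l h') ltr0_norm //; lra.
Qed.

Section Gen.
Variables (R : realType) (T : choiceType).
Implicit Types (f g p n : T -> R).

Definition FE g := (\esum_(x in [set: T]) (g x)%:E < +oo)%E.
Definition E g : R := fine (\esum_(x in [set: T]) (g x)%:E).
Definition rs f : R := fine (\esum_(x in [set: T]) (Num.max (f x) 0)%:E)
  - fine (\esum_(x in [set: T]) (Num.max (- f x) 0)%:E).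

Lemma esum_fin g : (forall x, 0 <= g x) -> FE g ->
  \esum_(x in [set: T]) (g x)%:E = (E g)%:E.
Proof.
move=> g0 fg; rewrite /E fineK // ge0_fin_numE //.
by apply: esum_ge0 => x _; rewrite lee_fin.
Qed.

Lemma FE_le g h : (forall x, 0 <= g x) -> (forall x, g x <= h x) -> FE h -> FE g.
Proof.
move=> g0 gh; apply: le_lt_trans; apply: le_esum => x _; by rewrite lee_fin.
Qed.

Lemma FE_D g h : (forall x, 0 <= g x) -> (forall x, 0 <= h x) -> FE g -> FE h ->
  FE (fun x => g x + h x).
Proof.
move=> g0 h0 fg fh; rewrite /FE (eq_esum (b := fun x => (g x)%:E + (h x)%:E)).
  rewrite esumD // => [|x _|x _]; last 2 first.
  - by rewrite lee_fin.
  - by rewrite lee_fin.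
  by rewrite (esum_fin g0 fg) (esum_fin h0 fh) -EFinD ltry.
by move=> x _; rewrite EFinD.
Qed.

Lemma E_D g h : (forall x, 0 <= g x) -> (forall x, 0 <= h x) -> FE g -> FE h ->
  E (fun x => g x + h x) = E g + E h.
Proof.
move=> g0 h0 fg fh; rewrite /E (eq_esum (b := fun x => (g x)%:E + (h x)%:E)).
  rewrite esumD // => [|x _|x _]; last 2 first.
  - by rewrite lee_fin.
  - by rewrite lee_fin.
  by rewrite (esum_fin g0 fg) (esum_fin h0 fh) -EFinD.
by move=> x _; rewrite EFinD.
Qed.

Lemma esumZ (c : R) (g : T -> \bar R) : 0 <= c -> (forall x, (0 <= g x)%E) ->
  \esum_(x in [set: T]) (c%:E * g x)%E = (c%:E * \esum_(x in [set: T]) g x)%E.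
Proof.
move=> c0 g0; rewrite /esum -ereal_supZl //; last first.
  by apply/set0P; exists 0%E; exists set0; [exact: fsets_set0| rewrite fsbig_set0].
congr ereal_sup; apply/seteqP; split => y /=.
  move=> [A hA <-]; exists (\sum_(x \in A) g x)%E; first by exists A.
  by rewrite ge0_mule_fsumr.
by move=> [z [A hA <-] <-]; exists A => //; rewrite ge0_mule_fsumr.
Qed.

Lemma FE_Z c g : 0 <= c -> (forall x, 0 <= g x) -> FE g -> FE (fun x => c * g x).
Proof.
move=> c0 g0 fg; rewrite /FE (eq_esum (b := fun x => (c%:E * (g x)%:E)%E)).
  have g0' : forall x, (0 <= (g x)%:E)%E by move=> x; rewrite lee_fin.
  rewrite esumZ //.
  by rewrite (esum_fin g0 fg) -EFinM ltry.
by move=> x _; rewrite EFinM.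
Qed.

Lemma E_Z c g : 0 <= c -> (forall x, 0 <= g x) -> FE g -> E (fun x => c * g x) = c * E g.
Proof.
move=> c0 g0 fg; rewrite /E (eq_esum (b := fun x => (c%:E * (g x)%:E)%E)).
  have g0' : forall x, (0 <= (g x)%:E)%E by move=> x; rewrite lee_fin.
  rewrite esumZ //.
  by rewrite (esum_fin g0 fg) -EFinM.
by move=> x _; rewrite EFinM.
Qed.

Lemma E_ge0 g : (forall x, 0 <= g x) -> 0 <= E g.
Proof. by move=> g0; rewrite /E fine_ge0 // esum_ge0 // => x _; rewrite lee_fin. Qed.

Lemma E0 : E (fun _ => 0) = 0.
Proof. by rewrite /E esum1. Qed.

Lemma FE0 : FE (fun _ => 0).
Proof. by rewrite /FE esum1. Qed.

Definition AS f := FE (fun x => `|f x|).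
Definition pos f x := Num.max (f x) 0.
Definition neg f x := Num.max (- f x) 0.

Lemma pos_ge0 f x : 0 <= pos f x. Proof. by rewrite /pos le_max lexx orbT. Qed.
Lemma neg_ge0 f x : 0 <= neg f x. Proof. by rewrite /neg le_max lexx orbT. Qed.
Lemma posneg f x : f x = pos f x - neg f x.
Proof.
rewrite /pos /neg; case: (lerP 0 (f x)) => h.
  by rewrite max_r ?subr0 // oppr_le0.
by rewrite max_l ?sub0r ?opprK // oppr_ge0 ltW.
Qed.
Lemma pos_le_abs f x : pos f x <= `|f x|.
Proof. by rewrite /pos ge_max ler_norm normr_ge0. Qed.
Lemma neg_le_abs f x : neg f x <= `|f x|.
Proof. by rewrite /neg ge_max -normrN ler_norm normr_ge0. Qed.

Lemma AS_pos f : AS f -> FE (pos f).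
Proof. by move=> h; apply: FE_le h => //; [exact: pos_ge0|exact: pos_le_abs]. Qed.
Lemma AS_neg f : AS f -> FE (neg f).
Proof. by move=> h; apply: FE_le h => //; [exact: neg_ge0|exact: neg_le_abs]. Qed.

Lemma rsE f : rs f = E (pos f) - E (neg f).
Proof. by []. Qed.

Lemma rs_split f p n : (forall x, 0 <= p x) -> (forall x, 0 <= n x) -> FE p -> FE n ->
  (forall x, f x = p x - n x) -> rs f = E p - E n.
Proof.
move=> p0 n0 fp fn hf.
have hpos : FE (pos f).
  apply: FE_le fp => x; first exact: pos_ge0.
  by rewrite /pos ge_max p0 andbT hf lerBlDr lerDl.
have hneg : FE (neg f).
  apply: FE_le fn => x; first exact: neg_ge0.
  by rewrite /neg ge_max n0 andbT hf opprB lerBlDr lerDl.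
have : E (fun x => pos f x + n x) = E (fun x => neg f x + p x).
  congr E; apply: funext => x; move: (posneg f x); rewrite hf => h.
  apply/eqP; rewrite -subr_eq0; apply/eqP; move: h; lra.
rewrite !E_D //; try exact: pos_ge0; try exact: neg_ge0.
by rewrite rsE; lra.
Qed.

Lemma AS_le f h : (forall x, `|f x| <= h x) -> FE h -> AS f.
Proof. by move=> fh; apply: FE_le => //. Qed.

Lemma AS_D f g : AS f -> AS g -> AS (fun x => f x + g x).
Proof.
move=> hf hg; apply: (AS_le (h := fun x => `|f x| + `|g x|)).
  by move=> x; apply: ler_normD.
by apply: FE_D.
Qed.

Lemma AS_Z c f : AS f -> AS (fun x => c * f x).
Proof.
move=> hf; apply: (AS_le (h := fun x => `|c| * `|f x|)).
  by move=> x; rewrite normrM.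
by apply: FE_Z.
Qed.

Lemma AS_N f : AS f -> AS (fun x => - f x).
Proof. by move=> hf; apply: (AS_le (h := fun x => `|f x|)) => // x; rewrite normrN. Qed.

Lemma rs_ge0 f : (forall x, 0 <= f x) -> FE f -> rs f = E f.
Proof.
move=> f0 hf; rewrite (rs_split (p := f) (n := fun _ => 0)) //.
- by rewrite E0 subr0.
- exact: FE0.
- by move=> x; rewrite subr0.
Qed.

Lemma rsD f g : AS f -> AS g -> rs (fun x => f x + g x) = rs f + rs g.
Proof.
move=> hf hg.
rewrite (rs_split (p := fun x => pos f x + pos g x) (n := fun x => neg f x + neg g x)).
- rewrite !E_D; try exact: pos_ge0; try exact: neg_ge0; try exact: AS_pos; try exact: AS_neg.
  by rewrite !rsE; lra.
- by move=> x; rewrite addr_ge0 // pos_ge0.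
- by move=> x; rewrite addr_ge0 // neg_ge0.
- by apply: FE_D; try exact: pos_ge0; apply: AS_pos.
- by apply: FE_D; try exact: neg_ge0; apply: AS_neg.
- by move=> x; rewrite (posneg f x) (posneg g x); lra.
Qed.

Lemma rsZ c f : AS f -> rs (fun x => c * f x) = c * rs f.
Proof.
move=> hf; case: (lerP 0 c) => hc.
  rewrite (rs_split (p := fun x => c * pos f x) (n := fun x => c * neg f x)).
  - by rewrite !E_Z //; try exact: pos_ge0; try exact: neg_ge0;
      try exact: AS_pos; try exact: AS_neg; rewrite rsE mulrBr.
  - by move=> x; rewrite mulr_ge0 // pos_ge0.
  - by move=> x; rewrite mulr_ge0 // neg_ge0.
  - by apply: FE_Z => //; [exact: pos_ge0|exact: AS_pos].
  - by apply: FE_Z => //; [exact: neg_ge0|exact: AS_neg].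
  - by move=> x; rewrite (posneg f x) mulrBr.
have hc' : 0 <= - c by rewrite oppr_ge0 ltW.
rewrite (rs_split (p := fun x => - c * neg f x) (n := fun x => - c * pos f x)).
- by rewrite !E_Z //; try exact: pos_ge0; try exact: neg_ge0;
    try exact: AS_pos; try exact: AS_neg; rewrite rsE; lra.
- by move=> x; rewrite mulr_ge0 // neg_ge0.
- by move=> x; rewrite mulr_ge0 // pos_ge0.
- by apply: FE_Z => //; [exact: neg_ge0|exact: AS_neg].
- by apply: FE_Z => //; [exact: pos_ge0|exact: AS_pos].
- by move=> x; rewrite (posneg f x); lra.
Qed.

Lemma rsB f g : AS f -> AS g -> rs (fun x => f x - g x) = rs f - rs g.
Proof.
move=> hf hg; rewrite rsD //; last exact: AS_N.
have -> : (fun x => - g x) = (fun x => -1 * g x) by apply: funext => x; lra.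
by rewrite rsZ //; lra.
Qed.

Lemma rs_le f g : AS f -> AS g -> (forall x, f x <= g x) -> rs f <= rs g.
Proof.
move=> hf hg fg.
have hd : AS (fun x => g x - f x) by apply: AS_D => //; apply: AS_N.
have -> : g = (fun x => f x + (g x - f x)) by apply: funext => x; lra.
rewrite rsD // lerDl rs_ge0 ?E_ge0 // => [x|x|]; try by rewrite subr_ge0.
apply: FE_le hd => x; first by rewrite subr_ge0.
exact: ler_norm.
Qed.

Lemma esum_reindex (e : T -> T) (g : T -> \bar R) : bijective e ->
  \esum_(x in [set: T]) g (e x) = \esum_(x in [set: T]) g x.
Proof.
by move=> be; have := reindex_esum [set: T] [set: T] e g; rewrite setTT_bijective => /(_ be) ->.
Qed.

Lemma E_reindex (e : T -> T) g : bijective e -> E (fun x => g (e x)) = E g.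
Proof. by move=> be; rewrite /E (esum_reindex (fun x => (g x)%:E) be). Qed.

Lemma FE_reindex (e : T -> T) g : bijective e -> FE (fun x => g (e x)) = FE g.
Proof. by move=> be; rewrite /FE (esum_reindex (fun x => (g x)%:E) be). Qed.

Lemma AS_reindex (e : T -> T) f : bijective e -> AS (fun x => f (e x)) = AS f.
Proof. by move=> be; rewrite /AS (FE_reindex (fun x => `|f x|) be). Qed.

Lemma rs_reindex (e : T -> T) f : bijective e -> rs (fun x => f (e x)) = rs f.
Proof.
move=> be; rewrite !rsE.
by rewrite (E_reindex (pos f) be) (E_reindex (neg f) be).
Qed.

Lemma esum_ge_pt (g : T -> \bar R) x : (forall y, (0 <= g y)%E) ->
  (g x <= \esum_(y in [set: T]) g y)%E.
Proof.
move=> g0; apply: esum_ge; exists [set x]; first by split => //; exact: finite_set1.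
by rewrite fsbig_set1.
Qed.

Lemma le_E_pt g x : (forall y, 0 <= g y) -> FE g -> g x <= E g.
Proof.
move=> g0 hg; rewrite -lee_fin -(esum_fin g0 hg).
by apply: esum_ge_pt => y; rewrite lee_fin.
Qed.

Lemma E_abs f : AS f -> E (fun x => `|f x|) = E (pos f) + E (neg f).
Proof.
move=> hf; rewrite -E_D; try exact: pos_ge0; try exact: neg_ge0; try exact: AS_pos; try exact: AS_neg.
by congr E; apply: funext => x; rewrite absmax.
Qed.

Lemma rs_abs_le f : AS f -> `|rs f| <= E (fun x => `|f x|).
Proof.
move=> hf; rewrite E_abs // rsE.
have h1 := E_ge0 (pos_ge0 f); have h2 := E_ge0 (neg_ge0 f).
rewrite ler_norml; apply/andP; split; lra.
Qed.

Lemma AS_sum m (F : 'I_m -> T -> R) : (forall k, AS (F k)) ->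
  AS (fun x => \sum_(k < m) F k x).
Proof.
elim: m F => [|m IH] F hF.
  by apply: (AS_le (h := fun _ => 0)) => [x|]; [rewrite big_ord0 normr0|exact: FE0].
have -> : (fun x => \sum_(k < m.+1) F k x) = (fun x => \sum_(k < m) F (widen_ord (leqnSn m) k) x + F ord_max x).
  by apply: funext => x; rewrite big_ord_recr.
by apply: AS_D => //; apply: (IH (fun k => F (widen_ord (leqnSn m) k))).
Qed.

Lemma rs_sum m (F : 'I_m -> T -> R) : (forall k, AS (F k)) ->
  rs (fun x => \sum_(k < m) F k x) = \sum_(k < m) rs (F k).
Proof.
elim: m F => [|m IH] F hF.
  rewrite big_ord0 (_ : (fun x => _) = fun _ => 0); last first.
    by apply: funext => x; rewrite big_ord0.
  by rewrite rs_ge0 ?E0 //; exact: FE0.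
have -> : (fun x => \sum_(k < m.+1) F k x) = (fun x => \sum_(k < m) F (widen_ord (leqnSn m) k) x + F ord_max x).
  by apply: funext => x; rewrite big_ord_recr.
have hs := AS_sum (fun k => hF (widen_ord (leqnSn m) k)).
rewrite rsD //.
by rewrite big_ord_recr /= (IH (fun k => F (widen_ord (leqnSn m) k))).
Qed.

End Gen.

Section Fub.
Variables (R : realType) (T1 T2 : choiceType).

Lemma esum_pair (G : T1 -> T2 -> \bar R) : (forall x y, (0 <= G x y)%E) ->
  \esum_(x in [set: T1]) \esum_(y in [set: T2]) G x y
  = \esum_(p in [set: T1 * T2]) G p.1 p.2.
Proof.
move=> G0; rewrite (esum_esum (J := fun _ => [set: T2])) //.
by congr esum; apply/seteqP; split => // -[x y].
Qed.

Variable (G : T1 -> T2 -> R).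
Hypothesis G0 : forall x y, 0 <= G x y.
Hypothesis hG : FE (fun p : T1 * T2 => G p.1 p.2).

Let G0' : forall x y, (0 <= (G x y)%:E)%E.
Proof. by move=> x y; rewrite lee_fin. Qed.

Lemma FE_sec x : FE (G x).
Proof.
rewrite /FE; apply: le_lt_trans hG; rewrite -(@esum_pair (fun x y => (G x y)%:E)) //.
by apply: (esum_ge_pt (g := fun x => \esum_(y in [set: T2]) (G x y)%:E)) => y; apply: esum_ge0.
Qed.

Lemma E_pair : FE (fun x => E (G x)) /\ E (fun x => E (G x)) = E (fun p : T1 * T2 => G p.1 p.2).
Proof.
have e : \esum_(x in [set: T1]) (E (G x))%:E = \esum_(p in [set: T1 * T2]) (G p.1 p.2)%:E.
  rewrite -(@esum_pair (fun x y => (G x y)%:E)) //; apply: eq_esum => x _; rewrite esum_fin //; exact: FE_sec.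
by split; rewrite /FE /E e.
Qed.

End Fub.

Section FubS.
Variables (R : realType) (T1 T2 : choiceType).
Variable (F : T1 -> T2 -> R).
Hypothesis hF : AS (fun p : T1 * T2 => F p.1 p.2).

Lemma AS_sec x : AS (F x).
Proof. exact: (FE_sec (G := fun x y => `|F x y|)). Qed.

Lemma AS_rs_sec : AS (fun x => rs (F x)).
Proof.
apply: (AS_le (h := fun x => E (fun y => `|F x y|))).
  by move=> x; apply: rs_abs_le; apply: AS_sec.
by case: (E_pair (G := fun x y => `|F x y|)).
Qed.

Lemma fubini : rs (fun x => rs (F x)) = rs (fun p : T1 * T2 => F p.1 p.2).
Proof.
set Fp := (fun p : T1 * T2 => F p.1 p.2).
have hP : FE (fun p : T1 * T2 => pos Fp (p.1, p.2)) by apply: AS_pos.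
have hN : FE (fun p : T1 * T2 => neg Fp (p.1, p.2)) by apply: AS_neg.
have P0 : forall x y, 0 <= pos Fp (x, y) by move=> x y; apply: pos_ge0.
have N0 : forall x y, 0 <= neg Fp (x, y) by move=> x y; apply: neg_ge0.
have [fP eP] := E_pair (G := fun x y => pos Fp (x, y)) P0 hP.
have [fN eN] := E_pair (G := fun x y => neg Fp (x, y)) N0 hN.
have e : forall x, rs (F x) = E (fun y => pos Fp (x, y)) - E (fun y => neg Fp (x, y)).
  move=> x; apply: rs_split => //.
  - exact: (FE_sec (G := fun x y => pos Fp (x, y))).
  - exact: (FE_sec (G := fun x y => neg Fp (x, y))).
  - by move=> y; exact: (posneg Fp (x, y)).
rewrite (rs_split (p := fun x => E (fun y => pos Fp (x, y))) (n := fun x => E (fun y => neg Fp (x, y)))) //.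
- by rewrite eP eN rsE; congr (E _ - E _); apply: funext => -[].
- by move=> x; apply: E_ge0.
- by move=> x; apply: E_ge0.
Qed.

End FubS.


Ltac sqt := first [exact: sqr_ge0 | move=> ?; exact: sqr_ge0].

Section Spec.
Variables (R : realType) (d : nat) (a : pt d -> R).
Hypothesis aS : AS a.
Hypothesis asym : forall z, a z = a (- z).
Hypothesis apos : forall z, z != 0 -> 0 <= a z.
Hypothesis asum : rs a = 0.
Local Notation T := (pt d).

Lemma bij_sub (x : T) : bijective (fun y : T => x - y).
Proof. by exists (fun y : T => x - y) => y; rewrite opprB addrC subrK. Qed.

Lemma bij_swap : bijective (fun p : T * T => (p.2, p.1)).
Proof. by exists (fun p : T * T => (p.2, p.1)) => -[]. Qed.

Lemma asym' x y : a (y - x) = a (x - y).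
Proof. by rewrite asym opprB. Qed.

Lemma FE_abs_a : FE (fun z => `|a z|).
Proof. exact: aS. Qed.

Lemma PA1 (g : T -> R) : (forall x, 0 <= g x) -> FE g ->
  FE (fun p : T * T => `|a (p.1 - p.2)| * g p.1).
Proof.
move=> g0 hg.
rewrite /FE -(@esum_pair _ _ _ (fun x y => (`|a (x - y)| * g x)%:E)); last first.
  by move=> x y; rewrite lee_fin mulr_ge0.
have e : forall x, \esum_(y in [set: T]) (`|a (x - y)| * g x)%:E
    = (g x * E (fun z => `|a z|))%:E.
  move=> x; rewrite (eq_esum (b := fun y => ((g x)%:E * (`|a (x - y)|)%:E)%E)); last first.
    by move=> y _; rewrite -EFinM mulrC.
  have hh : forall y, (0 <= (`|a (x - y)|)%:E)%E by move=> y; rewrite lee_fin.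
  rewrite esumZ //.
  rewrite (esum_reindex (fun z => (`|a z|)%:E) (bij_sub x)).
  by rewrite esum_fin // -EFinM.
rewrite (eq_esum (b := fun x => (g x * E (fun z => `|a z|))%:E)); last by move=> x _; exact: e.
change (FE (fun x => g x * E (fun z => `|a z|))).
have -> : (fun x => g x * E (fun z => `|a z|)) = (fun x => E (fun z => `|a z|) * g x).
  by apply: funext => x; rewrite mulrC.
by apply: FE_Z => //; apply: E_ge0.
Qed.

Lemma PA2 (g : T -> R) : (forall x, 0 <= g x) -> FE g ->
  FE (fun p : T * T => `|a (p.1 - p.2)| * g p.2).
Proof.
move=> g0 hg; rewrite -(FE_reindex _ bij_swap) /=.
have -> : (fun x : T * T => `|a (x.2 - x.1)| * g x.1) = (fun p : T * T => `|a (p.1 - p.2)| * g p.1).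
  by apply: funext => p; rewrite asym'.
exact: PA1.
Qed.

Definition L2 (u : T -> R) := FE (fun x => u x ^+ 2).

Lemma sq_ge0 (u : T -> R) x : 0 <= u x ^+ 2. Proof. exact: sqr_ge0. Qed.

Lemma AS_mul u v : L2 u -> L2 v -> AS (fun x => u x * v x).
Proof.
move=> hu hv; apply: (AS_le (h := fun x => u x ^+ 2 + v x ^+ 2)).
  move=> x; rewrite normrM.
  have := sqr_ge0 (`|u x| - `|v x|).
  rewrite -(real_normK (num_real (u x))) -(real_normK (num_real (v x))).
  have := normr_ge0 (u x); have := normr_ge0 (v x); nra.
by apply: FE_D => //; sqt.
Qed.

Lemma L2_D u v : L2 u -> L2 v -> L2 (fun x => u x + v x).
Proof.
move=> hu hv; apply: (FE_le (h := fun x => 2 * u x ^+ 2 + 2 * v x ^+ 2)).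
- by move=> x; sqt.
- by move=> x; have := sqr_ge0 (u x - v x); nra.
- by apply: FE_D; try (move=> x; apply: mulr_ge0 => //; sqt); apply: FE_Z => //; sqt.
Qed.

Lemma L2_Z c u : L2 u -> L2 (fun x => c * u x).
Proof.
move=> hu; apply: (FE_le (h := fun x => c ^+ 2 * u x ^+ 2)).
- by move=> x; sqt.
- by move=> x; rewrite exprMn.
- by apply: FE_Z => //; [sqt|sqt].
Qed.

Lemma L2_0 : L2 (fun _ => 0).
Proof. by rewrite /L2 (_ : (fun _ => _) = fun _ => 0) ?FE0 //; apply: funext => x; rewrite expr0n. Qed.

Lemma L2_sum m (c : 'I_m -> R) (v : 'I_m -> T -> R) : (forall k, L2 (v k)) ->
  L2 (fun x => \sum_(k < m) c k * v k x).
Proof.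
elim: m c v => [|m IH] c v hv.
  by rewrite (_ : (fun x => _) = fun _ => 0) ?L2_0 //; apply: funext => x; rewrite big_ord0.
have -> : (fun x => \sum_(k < m.+1) c k * v k x) = (fun x => \sum_(k < m) c (widen_ord (leqnSn m) k) * v (widen_ord (leqnSn m) k) x + c ord_max * v ord_max x).
  by apply: funext => x; rewrite big_ord_recr.
by apply: L2_D; [apply: IH|apply: L2_Z].
Qed.

Lemma conv_AS u x : L2 u -> AS (fun y => a (x - y) * u y).
Proof.
move=> hu; apply: (AS_le (h := fun y => (1 + E (fun z => u z ^+ 2)) * `|a (x - y)|)).
  move=> y; rewrite normrM mulrC ler_wpM2r //.
  have h1 : u y ^+ 2 <= E (fun z => u z ^+ 2) by exact: (le_E_pt _ (fun z => sqr_ge0 (u z)) hu).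
  have h2 : `|u y| <= 1 + u y ^+ 2.
    rewrite -(real_normK (num_real (u y))); have := normr_ge0 (u y); nra.
  lra.
apply: FE_Z.
- by rewrite addr_ge0 // E_ge0 // => z; sqt.
- by move=> y.
- by rewrite (FE_reindex (fun z => `|a z|) (bij_sub x)).
Qed.

Lemma opAE u x : opA a u x = rs (fun y => a (x - y) * u y).
Proof. by []. Qed.

Lemma rs0 : rs (fun _ : T => (0 : R)) = 0.
Proof. by rewrite rs_ge0 ?E0 //; exact: FE0. Qed.

Lemma ab_le (u v : R) : `|u| * `|v| <= u ^+ 2 + v ^+ 2.
Proof.
have := sqr_ge0 (`|u| - `|v|).
rewrite -(real_normK (num_real u)) -(real_normK (num_real v)).
have := normr_ge0 u; have := normr_ge0 v; nra.
Qed.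

Lemma AS_F f h : L2 f -> L2 h ->
  AS (fun p : T * T => h p.1 * (a (p.1 - p.2) * f p.2)).
Proof.
move=> hf hh.
apply: (AS_le (h := fun p : T * T => `|a (p.1 - p.2)| * h p.1 ^+ 2 + `|a (p.1 - p.2)| * f p.2 ^+ 2)).
  move=> p; rewrite !normrM mulrCA -mulrDr ler_wpM2l //; exact: ab_le.
apply: (@FE_D _ _ (fun p : T * T => `|a (p.1 - p.2)| * h p.1 ^+ 2) (fun p : T * T => `|a (p.1 - p.2)| * f p.2 ^+ 2)).
- by move=> p; rewrite mulr_ge0 // sqr_ge0.
- by move=> p; rewrite mulr_ge0 // sqr_ge0.
- exact: (@PA1 (fun x => h x ^+ 2) (fun x => sqr_ge0 _) hh).
- exact: (@PA2 (fun x => f x ^+ 2) (fun x => sqr_ge0 _) hf).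
Qed.

Lemma opA_sec f h : L2 f ->
  (fun x => opA a f x * h x) = (fun x => rs (fun y => h x * (a (x - y) * f y))).
Proof.
move=> hf; apply: funext => x; rewrite opAE mulrC rsZ //; exact: conv_AS.
Qed.

Lemma opA_sym f h : L2 f -> L2 h ->
  rs (fun x => opA a f x * h x) = rs (fun y => f y * opA a h y).
Proof.
move=> hf hh.
rewrite (opA_sec h hf) fubini; last exact: AS_F.
have -> : (fun y => f y * opA a h y) = (fun y => opA a h y * f y).
  by apply: funext => y; rewrite mulrC.
rewrite (opA_sec f hh) fubini; last exact: AS_F.
rewrite -(rs_reindex _ bij_swap) /=; congr rs; apply: funext => p.
by rewrite asym'; ring.
Qed.

Lemma opA_neg f : L2 f -> rs (fun x => opA a f x * f x) <= 0.
Proof.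
move=> hf.
rewrite (opA_sec f hf) fubini; last exact: AS_F.
have hg : FE (fun x => 2^-1 * f x ^+ 2) by apply: FE_Z => //; sqt.
have hg0 : forall x, 0 <= 2^-1 * f x ^+ 2 by move=> x; rewrite mulr_ge0 // sqr_ge0.
have A3 : AS (fun p : T * T => a (p.1 - p.2) * (2^-1 * f p.1 ^+ 2)).
  apply: (AS_le (h := fun p : T * T => `|a (p.1 - p.2)| * (2^-1 * f p.1 ^+ 2))).
    by move=> p; rewrite normrM (ger0_norm (hg0 _)).
  exact: (@PA1 (fun x => 2^-1 * f x ^+ 2) hg0 hg).
have A2 : AS (fun p : T * T => a (p.1 - p.2) * (2^-1 * f p.2 ^+ 2)).
  apply: (AS_le (h := fun p : T * T => `|a (p.1 - p.2)| * (2^-1 * f p.2 ^+ 2))).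
    by move=> p; rewrite normrM (ger0_norm (hg0 _)).
  exact: (@PA2 (fun x => 2^-1 * f x ^+ 2) hg0 hg).
apply: (le_trans (rs_le (AS_F hf hf) (AS_D A3 A2) _)).
  move=> [x y] /=; case: (eqVneq x y) => [<-|nxy].
    by rewrite subrr; nra.
  have ha : 0 <= a (x - y) by apply: apos; rewrite subr_eq0.
  have := mulr_ge0 ha (sqr_ge0 (f x - f y)); nra.
rewrite rsD //.
have e2 : rs (fun p : T * T => a (p.1 - p.2) * (2^-1 * f p.2 ^+ 2))
        = rs (fun p : T * T => a (p.1 - p.2) * (2^-1 * f p.1 ^+ 2)).
  rewrite -(rs_reindex _ bij_swap) /=; congr rs; apply: funext => p.
  by rewrite asym'.
rewrite e2.
have e3 : rs (fun p : T * T => a (p.1 - p.2) * (2^-1 * f p.1 ^+ 2)) = 0.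
  rewrite -(fubini (F := fun x y => a (x - y) * (2^-1 * f x ^+ 2))) //.
  rewrite -rs0; congr rs; apply: funext => x.
  have -> : (fun y => a (x - y) * (2^-1 * f x ^+ 2)) = (fun y => (2^-1 * f x ^+ 2) * a (x - y)).
    by apply: funext => y; rewrite mulrC.
  rewrite rsZ; last by rewrite (AS_reindex a (bij_sub x)).
  by rewrite (rs_reindex a (bij_sub x)) asum mulr0.
by rewrite e3 addr0.
Qed.

End Spec.

Lemma dep_rows (F : fieldType) m n (M : 'M[F]_(m, n)) : (n < m)%N ->
  exists c : 'rV[F]_m, c != 0 /\ c *m M = 0.
Proof.
move=> nm.
have : kermx M != 0.
  rewrite -mxrank_eq0 mxrank_ker -lt0n subn_gt0; exact: leq_ltn_trans (rank_leq_col M) nm.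
by move=> /rowV0Pn [c /sub_kermxP hc c0]; exists c.
Qed.

Section Main.
Variables (R : realType) (d N : nat) (a : pt d -> R) (xs : 'I_N -> pt d) (beta : R).
Hypothesis aS : AS a.
Hypothesis asym : forall z, a z = a (- z).
Hypothesis apos : forall z, z != 0 -> 0 <= a z.
Hypothesis asum : rs a = 0.
Local Notation T := (pt d).

Definition P (u : T -> R) x := \sum_(i < N) (if x == xs i then u (xs i) else 0).

Lemma opHE u x : opH a xs beta u x = opA a u x + beta * P u x.
Proof. by []. Qed.

Lemma opA_lin m (c : 'I_m -> R) (v : 'I_m -> T -> R) x : (forall k, L2 (v k)) ->
  opA a (fun y => \sum_(k < m) c k * v k y) x = \sum_(k < m) c k * opA a (v k) x.
Proof.
move=> hv; rewrite opAE.
have -> : (fun y => a (x - y) * \sum_(k < m) c k * v k y)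
        = (fun y => \sum_(k < m) (fun k y => c k * (a (x - y) * v k y)) k y).
  by apply: funext => y; rewrite mulr_sumr; apply: eq_bigr => k _; rewrite mulrCA.
rewrite rs_sum; last by move=> k; apply: AS_Z; apply: conv_AS.
by apply: eq_bigr => k _; rewrite rsZ //; apply: conv_AS.
Qed.

Lemma P_lin m (c : 'I_m -> R) (v : 'I_m -> T -> R) x :
  P (fun y => \sum_(k < m) c k * v k y) x = \sum_(k < m) c k * P (v k) x.
Proof.
rewrite /P.
have -> : \sum_(i < N) (if x == xs i then \sum_(k < m) c k * v k (xs i) else 0)
   = \sum_(i < N) \sum_(k < m) c k * (if x == xs i then v k (xs i) else 0).
  apply: eq_bigr => i _; case: eqP => _ //.
  by rewrite big1 // => k _; rewrite mulr0.
rewrite exchange_big /=; apply: eq_bigr => k _; by rewrite mulr_sumr.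
Qed.

Lemma eig_lin m (c : 'I_m -> R) (v : 'I_m -> T -> R) lam : (forall k, L2 (v k)) ->
  (forall k x, opH a xs beta (v k) x = lam * v k x) ->
  forall x, opH a xs beta (fun y => \sum_(k < m) c k * v k y) x
            = lam * \sum_(k < m) c k * v k x.
Proof.
move=> hv he x; rewrite opHE opA_lin // P_lin mulr_sumr -big_split /= mulr_sumr.
apply: eq_bigr => k _; rewrite mulrCA -mulrDr -opHE he; ring.
Qed.

Lemma L2_P (u : T -> R) : L2 (P u).
Proof.
have hd : forall y : T, L2 (fun x => if x == y then (1 : R) else 0) : Prop.
  move=> y; rewrite /L2 /FE.
  rewrite (eq_esum (b := fun x => if x \in [set y] then 1%:E else 0%E)); last first.
    by move=> x _; rewrite in_set1; case: eqP; rewrite ?expr1n ?expr0n.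
  by rewrite -esum_mkcond esum_set1 ?ltry.
have -> : P u = (fun x => \sum_(i < N) u (xs i) * (fun i x => if x == xs i then 1 else 0) i x).
  apply: funext => x; rewrite /P; apply: eq_bigr => i _; case: eqP => _; ring.
by apply: L2_sum => i; apply: hd.
Qed.

Lemma eig_eq u lam : (forall x, opH a xs beta u x = lam * u x) ->
  opA a u = (fun x => lam * u x - beta * P u x).
Proof. by move=> he; apply: funext => x; rewrite -he opHE; ring. Qed.

Lemma core v w lam lam0 : L2 v -> L2 w -> (exists x, w x != 0) ->
  (forall x, opH a xs beta v x = lam * v x) ->
  (forall x, opH a xs beta w x = lam0 * w x) ->
  (forall i, v (xs i) = w (xs i)) -> 0 <= lam -> lam < lam0 -> False.
Proof.
move=> hv hw [x0 wx0] ev ew vw l0 ll.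
have Pvw : P v = P w by apply: funext => x; apply: eq_bigr => i _; rewrite vw.
have Av := eig_eq ev; have Aw := eig_eq ew; rewrite Pvw in Av.
set g := P w in Av Aw.
have hg : L2 g by exact: L2_P.
have gwv : (fun x => g x * w x) = (fun x => g x * v x).
  apply: funext => x; rewrite /g /P !mulr_suml; apply: eq_bigr => i _.
  by case: eqP => [->|_]; rewrite ?mul0r // vw.
have sym := opA_sym aS asym hv hw.
rewrite Av Aw in sym.
have ASvw := AS_mul hv hw; have ASgw := AS_mul hg hw; have ASgv := AS_mul hg hv.
have e1 : rs (fun x => (lam * v x - beta * g x) * w x) = lam * rs (fun x => v x * w x) - beta * rs (fun x => g x * w x).
  have -> : (fun x => (lam * v x - beta * g x) * w x) = (fun x => lam * (v x * w x) - beta * (g x * w x)).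
    by apply: funext => x; ring.
  by rewrite rsB ?rsZ //; apply: AS_Z.
have e2 : rs (fun x => v x * (lam0 * w x - beta * g x)) = lam0 * rs (fun x => v x * w x) - beta * rs (fun x => g x * w x).
  have -> : (fun x => v x * (lam0 * w x - beta * g x)) = (fun x => lam0 * (v x * w x) - beta * (g x * v x)).
    by apply: funext => x; ring.
  by rewrite rsB ?rsZ // ?gwv //; apply: AS_Z.
rewrite e1 e2 in sym.
have p0 : rs (fun x => v x * w x) = 0.
  have : (lam0 - lam) * rs (fun x => v x * w x) = 0 by lra.
  by move/eqP; rewrite mulf_eq0 => /orP[|/eqP //]; rewrite subr_eq0 => /eqP h; move: ll; rewrite h ltxx.
have hw' : L2 (fun x => - w x).
  rewrite (_ : (fun x => - w x) = (fun x => -1 * w x)); first exact: L2_Z.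
  by apply: funext => x; ring.
have he : L2 (fun x => v x - w x) by exact: L2_D hv hw'.
have neg := opA_neg aS asym apos asum he.
have Ae : opA a (fun x => v x - w x) = (fun x => lam * v x - lam0 * w x).
  apply: funext => x; rewrite opAE.
  have -> : (fun y => a (x - y) * (v y - w y)) = (fun y => a (x - y) * v y - a (x - y) * w y).
    by apply: funext => y; ring.
  rewrite rsB; try exact: conv_AS.
  rewrite -!opAE Av Aw /=; ring.
rewrite Ae in neg.
have ASvv := AS_mul hv hv; have ASww := AS_mul hw hw.
have e3 : rs (fun x => (lam * v x - lam0 * w x) * (v x - w x))
   = lam * rs (fun x => v x * v x) - (lam + lam0) * rs (fun x => v x * w x) + lam0 * rs (fun x => w x * w x).
  have -> : (fun x => (lam * v x - lam0 * w x) * (v x - w x))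
     = (fun x => (lam * (v x * v x) - (lam + lam0) * (v x * w x)) + lam0 * (w x * w x)).
    by apply: funext => x; ring.
  rewrite rsD; [|apply: AS_D; [apply: AS_Z|apply: AS_N; apply: AS_Z] => //|by apply: AS_Z].
  by rewrite rsB ?rsZ //; apply: AS_Z.
rewrite e3 p0 in neg.
have Ev : 0 <= rs (fun x => v x * v x).
  rewrite rs_ge0; [apply: E_ge0| |] => [x|x|]; rewrite -?expr2; try exact: sqr_ge0.
  exact: hv.
have Ew : w x0 ^+ 2 <= rs (fun x => w x * w x).
  rewrite rs_ge0; last 2 first.
  - by move=> x; rewrite -expr2 sqr_ge0.
  - exact: hw.
  exact: (le_E_pt x0 (fun z => sqr_ge0 (w z)) hw).
have wpos : 0 < w x0 ^+ 2 by rewrite expr2 -expr2 exprn_even_gt0 //=.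
nra.
Qed.

Lemma inj_ev u lam : L2 u -> (forall x, opH a xs beta u x = lam * u x) -> 0 < lam ->
  (forall i, u (xs i) = 0) -> forall x, u x = 0.
Proof.
move=> hu eu lp u0 x.
have Pu : P u = (fun _ => 0).
  by apply: funext => y; rewrite /P big1 // => i _; rewrite u0; case: eqP.
have Au := eig_eq eu; rewrite Pu in Au.
have neg := opA_neg aS asym apos asum hu; rewrite Au in neg.
have ASuu := AS_mul hu hu.
have e : (fun x => (lam * u x - beta * 0) * u x) = (fun x => lam * (u x * u x)).
  by apply: funext => y; ring.
rewrite e rsZ // in neg.
have Eu : u x ^+ 2 <= rs (fun x => u x * u x).
  rewrite rs_ge0; last 2 first.
  - by move=> y; rewrite -expr2 sqr_ge0.
  - exact: hu.
  exact: (le_E_pt x (fun z => sqr_ge0 (u z)) hu).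
have h0 : u x ^+ 2 <= 0.
  apply: (le_trans Eu); rewrite -(pmulr_rle0 _ lp); exact: neg.
have := sqr_ge0 (u x); move=> h1.
have : u x ^+ 2 = 0 by apply/eqP; rewrite eq_le h0 h1.
by move/eqP; rewrite sqrf_eq0 => /eqP.
Qed.

End Main.

Unset Implicit Arguments.
Local Close Scope classical_set_scope.

Theorem corollary1 (R : realType) (d N : nat) (a : pt d -> R)
  (xs : 'I_N -> pt d) (beta bc lam0 : R) :
  (1 <= d)%N -> (2 <= N)%N ->
  rw_kernel a -> irreducible_kernel a -> (condF a \/ condHT a) ->
  injective xs ->
  is_beta_c a xs bc -> bc < beta ->
  largest_pos_eigenvalue (opH a xs beta) lam0 ->
  forall lam : R, 0 < lam -> is_eigenvalue (opH a xs beta) lam -> lam <> lam0 ->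
    eigenspace_dim_le (opH a xs beta) lam N.-1.
Proof.
move=> _ N2 [_ apos asym aS asum] _ _ _ _ _ [_ [w [hw wn0 ew]] lmax] lam lpos hev lne.
have lt : lam < lam0 by rewrite lt_neqAle; apply/andP; split; [apply/eqP|exact: lmax].
have [x0 wx0] : exists x0, w x0 != 0.
  case: (pselect (exists x0, w x0 != 0)) => // h; exfalso; apply: wn0.
  apply: funext => x; apply/eqP; apply/negPn/negP => hx; by apply: h; exists x.
move=> v hv.
have hvL k : L2 (v k) by case: (hv k).
have hvE k x : opH a xs beta (v k) x = lam * v k x by case: (hv k) => _; apply.
set n := N.-1.
have NE : N = n.+1 by rewrite /n prednK // (leq_trans _ N2).
pose M : 'M[R]_(n.+2, N) := \matrix_(k, i) (if (k < n.+1)%N then v (inord k) (xs i) else w (xs i)).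
have [c [c0 cM]] : exists c : 'rV[R]_(n.+2), c != 0 /\ c *m M = 0.
  by apply: dep_rows; rewrite NE.
pose c' (k : 'I_n.+1) := c 0 (widen_ord (leqnSn _) k).
pose cl := c 0 ord_max.
have Ei : forall i, \sum_(k < n.+1) c' k * v k (xs i) + cl * w (xs i) = 0.
  move=> i; have := congr1 (fun (A : 'M[R]_(1, N)) => A 0 i) cM; rewrite /= !mxE big_ord_recr /=.
  rewrite /M !mxE /= ltnn => h; apply: (etrans _ h); rewrite /c' /cl; congr (_ + _); apply: eq_bigr => k _.
  rewrite !mxE /= ltn_ord; congr (_ * v _ _); apply: val_inj; rewrite /= inordK //.
have [j cj] : exists j, c 0 j != 0.
  case: (pickP (fun j => c 0 j != 0)) => [j hj|h]; first by exists j.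
  move: c0; have -> : c = 0 by apply/rowP => j; rewrite mxE; move/negbFE: (h j) => /eqP.
  by rewrite eqxx.
case: (eqVneq cl 0) => hcl.
  exists c'; split.
    move: cj; case: (unliftP ord_max j) => [k ->|->]; last by rewrite -/cl hcl eqxx.
    move=> ck; exists k; rewrite /c' (_ : widen_ord _ k = lift ord_max k) //.
    by apply: val_inj; rewrite /= /bump leqNgt ltn_ord.
  apply: (inj_ev (u := fun x => \sum_(k < n.+1) c' k * v k x) aS asym apos asum (lam := lam)).
  - exact: L2_sum.
  - exact: eig_lin.
  - exact: lpos.
  - by move=> i; have := Ei i; rewrite hcl mul0r addr0.
exfalso.
apply: (core aS asym apos asum (v := fun x => \sum_(k < n.+1) (- c' k / cl) * v k x) (w := w) (lam := lam) (lam0 := lam0)).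
- exact: L2_sum.
- exact: hw.
- by exists x0.
- exact: eig_lin.
- exact: ew.
- move=> i; have h := Ei i.
  have h' : \sum_(k < n.+1) c' k * v k (xs i) = - (cl * w (xs i)).
    by apply/eqP; rewrite -subr_eq0 opprK h.
  rewrite (eq_bigr (fun k => (- cl^-1) * (c' k * v k (xs i)))); last by move=> k _; ring.
  by rewrite -mulr_sumr h' mulrN mulNr opprK mulrA mulVf ?mul1r.
- exact: ltW.
- exact: lt.
Qed.
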